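(* Every implicational formula is classically equivalent (i.e. has the same truth value under every Boolean valuation) to an implicational formula of order at most three.
   Context: Implicational formulas are built from propositional variables using $\to$ only. Order: an atom has order $0$, and $r(\sigma\to\tau)=\max(r(\tau),r(\sigma)+1)$. *)

(* Defs.v *)
From Stdlib Require Import Arith.

Inductive form : Type :=
| Var : nat -> form
| Imp : form -> form -> form.

Fixpoint order (f : form) : nat :=
  match f with
  | Var _ => 0
  | Imp s t => Nat.max (order t) (S (order s))
  end.

Fixpoint beval (v : nat -> bool) (f : form) : bool :=
  match f with
  | Var n => v n
  | Imp s t => implb (beval v s) (beval v t)
  end.

Definition class_equiv (f g : form) : Prop :=
  forall v : nat -> bool, beval v f = beval v g.

(* Main.v *)
Require Import Defs.
From Stdlib Require Import List Bool Arith Lia.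
Import ListNotations.

Inductive lit := Pos (n : nat) | Neg (n : nat).
Definition lv (v : nat -> bool) (l : lit) : bool :=
  match l with Pos n => v n | Neg n => negb (v n) end.
Definition evalD v (D : list (list lit)) := existsb (forallb (lv v)) D.
Definition prodD (a b : list (list lit)) :=
  flat_map (fun x => map (fun y => x ++ y) b) a.

Fixpoint dn (f : form) : list (list lit) * list (list lit) :=
  match f with
  | Var x => ([[Pos x]], [[Neg x]])
  | Imp s t => (snd (dn s) ++ fst (dn t), prodD (fst (dn s)) (snd (dn t)))
  end.

Lemma evalD_app v a b : evalD v (a ++ b) = evalD v a || evalD v b.
Proof. unfold evalD. apply existsb_app. Qed.

Lemma evalD_prod v a b : evalD v (prodD a b) = evalD v a && evalD v b.
Proof.
  unfold evalD, prodD. induction a as [|x a IH]; simpl; auto.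
  rewrite existsb_app, IH.
  assert (H : existsb (forallb (lv v)) (map (fun y => x ++ y) b)
              = forallb (lv v) x && existsb (forallb (lv v)) b).
  { clear IH. induction b as [|y b IHb]; simpl; [now destruct (forallb (lv v) x)|].
    rewrite forallb_app, IHb. destruct (forallb (lv v) x), (forallb (lv v) y); reflexivity. }
  rewrite H. now destruct (forallb (lv v) x), (existsb (forallb (lv v)) a), (existsb (forallb (lv v)) b).
Qed.

Lemma dn_ok v f : evalD v (fst (dn f)) = beval v f /\ evalD v (snd (dn f)) = negb (beval v f).
Proof.
  induction f as [x|s [IHs1 IHs2] t [IHt1 IHt2]]; simpl.
  - unfold evalD; simpl. destruct (v x); auto.
  - rewrite evalD_app, evalD_prod, IHs1, IHs2, IHt1, IHt2.
    destruct (beval v s), (beval v t); auto.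
Qed.

Definition litF p l := match l with Pos x => Var x | Neg x => Imp (Var x) (Var p) end.
Definition termF p (ls : list lit) := fold_right (fun l acc => Imp (litF p l) acc) (Var p) ls.
Definition mainF p (D : list (list lit)) := fold_right (fun t acc => Imp (termF p t) acc) (Var p) D.

Lemma termF_order p ls : order (termF p ls) <= 2.
Proof. induction ls as [|[x|x] ls IH]; simpl in *; lia. Qed.
Lemma mainF_order p D : order (mainF p D) <= 3.
Proof. induction D as [|t D IH]; simpl; [lia|]. pose proof (termF_order p t). lia. Qed.

Lemma termF_eval v p ls : v p = false -> beval v (termF p ls) = negb (forallb (lv v) ls).
Proof.
  intro Hp. induction ls as [|[x|x] ls IH]; simpl; rewrite ?IH, ?Hp; auto;
  destruct (v x), (forallb (lv v) ls); auto.
Qed.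
Lemma mainF_eval v p D : v p = false -> beval v (mainF p D) = evalD v D.
Proof.
  intro Hp. unfold evalD. induction D as [|t D IH]; simpl; rewrite ?IH, ?termF_eval, ?Hp; auto.
  destruct (forallb (lv v) t); auto.
Qed.
Lemma mainF_true v p D : v p = true -> beval v (mainF p D) = true.
Proof. intro Hp. induction D; simpl; rewrite ?IHD, ?Hp; auto; apply implb_true_r. Qed.

Fixpoint head (f : form) : nat := match f with Var n => n | Imp _ t => head t end.
Lemma head_true v f : v (head f) = true -> beval v f = true.
Proof. induction f; simpl; intros; auto. rewrite IHf2; auto; apply implb_true_r. Qed.

Theorem proposition4p3 :
  forall f : form, exists g : form, order g <= 3 /\ class_equiv f g.
Proof.
  intro f. exists (mainF (head f) (fst (dn f))). split; [apply mainF_order|].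
  intro v. destruct (v (head f)) eqn:H.
  - rewrite head_true, mainF_true; auto.
  - rewrite mainF_eval; auto. symmetry. apply (dn_ok v f).
Qed.
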